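(* Let $G=A*_C B$ be an amalgamated free product and let $P$ be a normal subsemigroup of $A$ with $P\cap C=\emptyset$. If $n\ge1$, $d_1,\dots,d_n\in P$ and $f_1,\dots,f_n\in G\setminus A$, then $d_1^{f_1}\cdots d_n^{f_n}\notin A$.
   Context: Notation $x^y=y^{-1}xy$. A normal subsemigroup of a group $H$ is a (possibly empty) subset closed under multiplication and under conjugation by elements of $H$. *)

(* Defs.v *)
Record Group := {
  carrier :> Type;
  gmul : carrier -> carrier -> carrier;
  gone : carrier;
  ginv : carrier -> carrier;
  gmulA : forall x y z, gmul x (gmul y z) = gmul (gmul x y) z;
  gmul1 : forall x, gmul gone x = x;
  gmulV : forall x, gmul (ginv x) x = gone
}.

Arguments gmul {g}.
Arguments gone {g}.
Arguments ginv {g}.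

Definition gconj {G : Group} (x y : G) : G := gmul (ginv y) (gmul x y).

Definition subgroup {G : Group} (S : G -> Prop) : Prop :=
  S gone /\ (forall x y, S x -> S y -> S (gmul x y)) /\ (forall x, S x -> S (ginv x)).

Definition is_hom {G H : Group} (h : G -> H) : Prop :=
  forall x y, h (gmul x y) = gmul (h x) (h y).

(* G is the (internal) amalgamated free product A *_C B with C = A ∩ B:
   A, B are subgroups of G, and G has the universal property of the pushout:
   any pair of homomorphisms from A and from B to a group H that agree on
   C = A ∩ B extends uniquely to a homomorphism G -> H. *)
Definition is_amalgamated_free_product (G : Group) (A B : G -> Prop) : Prop :=
  subgroup A /\ subgroup B /\
  forall (H : Group) (phi psi : G -> H),
    (forall x y, A x -> A y -> phi (gmul x y) = gmul (phi x) (phi y)) ->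
    (forall x y, B x -> B y -> psi (gmul x y) = gmul (psi x) (psi y)) ->
    (forall c, A c -> B c -> phi c = psi c) ->
    exists h : G -> H,
      is_hom h /\ (forall a, A a -> h a = phi a) /\ (forall b, B b -> h b = psi b) /\
      (forall h' : G -> H, is_hom h' -> (forall a, A a -> h' a = phi a) ->
         (forall b, B b -> h' b = psi b) -> forall x, h' x = h x).

Definition normal_subsemigroup {G : Group} (A P : G -> Prop) : Prop :=
  (forall x, P x -> A x) /\
  (forall x y, P x -> P y -> P (gmul x y)) /\
  (forall x a, P x -> A a -> P (gconj x a)).

Fixpoint iprod {G : Group} (n : nat) (F : nat -> G) : G :=
  match n with
  | O => gone
  | S m => gmul (iprod m F) (F m)
  end.

(* Main.v *)
Require Import Defs.
From Stdlib Require Import List Lia Arith.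
From Stdlib Require Import ClassicalEpsilon FunctionalExtensionality ProofIrrelevance PropExtensionality Classical.
Import ListNotations.

Section GroupLemmas.
Variable G : Group.
Notation "x ⋅ y" := (@gmul G x y) (at level 40, left associativity).
Notation "1" := (@gone G).

Lemma mulgV (x : G) : x ⋅ ginv x = 1.
Proof.
  rewrite <- (gmul1 G (x ⋅ ginv x)).
  rewrite <- (gmulV G (ginv x)) at 1.
  rewrite <- gmulA. rewrite (gmulA G (ginv x) x (ginv x)).
  rewrite gmulV, gmul1. apply gmulV.
Qed.

Lemma mulg1 (x : G) : x ⋅ 1 = x.
Proof. rewrite <- (gmulV G x), gmulA, mulgV, gmul1. reflexivity. Qed.

Lemma mulKg (x y : G) : ginv x ⋅ (x ⋅ y) = y.
Proof. rewrite gmulA, gmulV, gmul1. reflexivity. Qed.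
Lemma mulVKg (x y : G) : x ⋅ (ginv x ⋅ y) = y.
Proof. rewrite gmulA, mulgV, gmul1. reflexivity. Qed.
Lemma mulgK (x y : G) : (y ⋅ x) ⋅ ginv x = y.
Proof. rewrite <- gmulA, mulgV, mulg1. reflexivity. Qed.
Lemma mulgVK (x y : G) : (y ⋅ ginv x) ⋅ x = y.
Proof. rewrite <- gmulA, gmulV, mulg1. reflexivity. Qed.

Lemma mulg_cancel_l (x y z : G) : x ⋅ y = x ⋅ z -> y = z.
Proof. intro H. rewrite <- (mulKg x y), H, mulKg. reflexivity. Qed.
Lemma mulg_cancel_r (x y z : G) : y ⋅ x = z ⋅ x -> y = z.
Proof. intro H. rewrite <- (mulgK x y), H, mulgK. reflexivity. Qed.

Lemma inv_uniq (x y : G) : x ⋅ y = 1 -> y = ginv x.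
Proof. intro H. apply (mulg_cancel_l x). rewrite H, mulgV. reflexivity. Qed.

Lemma invK (x : G) : ginv (ginv x) = x.
Proof. symmetry. apply inv_uniq. apply gmulV. Qed.

Lemma invM (x y : G) : ginv (x ⋅ y) = ginv y ⋅ ginv x.
Proof. symmetry. apply inv_uniq. rewrite <- gmulA, (gmulA G y), mulgV, gmul1, mulgV. reflexivity. Qed.

Lemma inv1 : ginv (1) = 1.
Proof. symmetry. apply inv_uniq. apply gmul1. Qed.

Lemma idem_one (x : G) : x ⋅ x = x -> x = 1.
Proof. intro H. apply (mulg_cancel_l x). rewrite H, mulg1. reflexivity. Qed.

End GroupLemmas.

Ltac gsimpl := repeat (rewrite ?invM, ?invK, <- ?gmulA, ?mulKg, ?mulVKg, ?mulgV, ?gmulV, ?mulg1, ?gmul1).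

Section TreeLemma.
Variable G : Group.
Notation "x ⋅ y" := (@gmul G x y) (at level 40, left associativity).
Notation "1" := (@gone G).
Variables A P : G -> Prop.
Hypothesis Pmul : forall x y, P x -> P y -> P (x ⋅ y).
Hypothesis Pnorm : forall x a, P x -> A a -> P (gconj x a).
Variable X : Type.
Variable act : G -> X -> X.
Hypothesis act_mul : forall g k x, act (g ⋅ k) x = act g (act k x).
Hypothesis act_one : forall x, act 1 x = x.
Variable d : X -> X -> nat.
Hypothesis d_sym : forall x y, d x y = d y x.
Hypothesis d_refl : forall x, d x x = 0.
Hypothesis d_zero : forall x y, d x y = 0 -> x = y.
Hypothesis d_tri : forall x y z, d x z <= d x y + d y z.
Hypothesis d_four : forall x y z w, d x y + d z w <= Nat.max (d x z + d y w) (d x w + d y z).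
Hypothesis d_iso : forall g x y, d (act g x) (act g y) = d x y.
Variable v : X.
Hypothesis stab : forall g, act g v = v -> A g.
Hypothesis rot : forall p, P p -> forall x, d x (act p x) = d v x + d v x.

Lemma act_inv_l g x : act (ginv g) (act g x) = x.
Proof. rewrite <- act_mul, gmulV, act_one. reflexivity. Qed.
Lemma act_inv_r g x : act g (act (ginv g) x) = x.
Proof. rewrite <- act_mul, mulgV, act_one. reflexivity. Qed.

Definition rr (z : G * G) : G := gconj (snd z) (fst z).
Definition uu (z : G * G) : X := act (ginv (fst z)) v.
Definition lam (z : G * G) : nat := d v (uu z).

Lemma act_rr z x : act (rr z) x = act (ginv (fst z)) (act (snd z) (act (fst z) x)).
Proof. unfold rr, gconj. rewrite !act_mul. reflexivity. Qed.

Lemma rot_dist z (Hz : P (snd z)) x : d x (act (rr z) x) = d (uu z) x + d (uu z) x.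
Proof.
  rewrite act_rr.
  rewrite <- (d_iso (fst z)), act_inv_r, rot by exact Hz.
  unfold uu. rewrite <- (d_iso (ginv (fst z)) v), act_inv_l. reflexivity.
Qed.

Lemma rot_fix z (Hz : P (snd z)) : act (rr z) (uu z) = uu z.
Proof.
  symmetry. apply d_zero. rewrite rot_dist by exact Hz. rewrite d_refl. reflexivity.
Qed.

Lemma rot_fix_inv z (Hz : P (snd z)) : act (ginv (rr z)) (uu z) = uu z.
Proof.
  rewrite <- (rot_fix z Hz) at 1. apply act_inv_l.
Qed.

Lemma rot_u_v z (Hz : P (snd z)) : d (uu z) (act (rr z) v) = lam z.
Proof.
  unfold lam. rewrite <- (rot_fix z Hz) at 1. rewrite d_iso, d_sym. reflexivity.
Qed.

Lemma rot_v z (Hz : P (snd z)) : d v (act (rr z) v) = lam z + lam z.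
Proof. rewrite rot_dist by exact Hz. unfold lam. rewrite d_sym. reflexivity. Qed.

Lemma midpoint o p q p' L : d p q = L -> d q p' = L -> d p p' = L + L ->
  d o q + L = Nat.max (d o p) (d o p').
Proof.
  intros H1 H2 H3.
  pose proof (d_four o q p p') as F.
  pose proof (d_tri o q p) as T1. pose proof (d_tri o q p') as T2.
  rewrite (d_sym q p) in *. lia.
Qed.

Fixpoint prod (L : list (G * G)) : G :=
  match L with [] => 1 | z :: L' => rr z ⋅ prod L' end.
Fixpoint Lam (L : list (G * G)) : nat :=
  match L with [] => 0 | z :: L' => lam z + Lam L' end.
Definition nv (g : G) : nat := d v (act g v).
Fixpoint maxp (g : G) (L : list (G * G)) : nat :=
  match L with [] => nv g | z :: L' => Nat.max (nv g) (maxp (g ⋅ rr z) L') end.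
Fixpoint phi (g : G) (L : list (G * G)) : nat :=
  match L with [] => nv g | z :: L' => nv g + phi (g ⋅ rr z) L' end.
Fixpoint pre (g : G) (L : list (G * G)) : nat :=
  match L with [] => 0 | z :: L' => nv g + pre (g ⋅ rr z) L' end.

Lemma prod_app L1 L2 : prod (L1 ++ L2) = prod L1 ⋅ prod L2.
Proof.
  induction L1; simpl. rewrite gmul1. reflexivity.
  rewrite IHL1, gmulA. reflexivity.
Qed.
Lemma Lam_app L1 L2 : Lam (L1 ++ L2) = Lam L1 + Lam L2.
Proof. induction L1; simpl; lia. Qed.
Lemma phi_app g L1 L2 : phi g (L1 ++ L2) = pre g L1 + phi (g ⋅ prod L1) L2.
Proof.
  revert g; induction L1; intro g; simpl.
  rewrite mulg1. reflexivity.
  rewrite IHL1, gmulA. lia.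
Qed.
Lemma maxp_prefix g L1 L2 : nv (g ⋅ prod L1) <= maxp g (L1 ++ L2).
Proof.
  revert g; induction L1; intro g; simpl.
  - rewrite mulg1. destruct L2; simpl; lia.
  - specialize (IHL1 (g ⋅ rr a)). rewrite <- gmulA in IHL1. lia.
Qed.
Lemma maxp_ge g L : nv g <= maxp g L.
Proof. destruct L; simpl; lia. Qed.

Lemma first_max g L : nv g < maxp g L ->
  exists L1 z L2, L = L1 ++ z :: L2 /\ nv (g ⋅ prod L1) < maxp g L /\
     nv (g ⋅ prod L1 ⋅ rr z) = maxp g L.
Proof.
  revert g; induction L as [|z L IH]; intros g H.
  - simpl in H. lia.
  - assert (Hm : maxp g (z :: L) = maxp (g ⋅ rr z) L) by (simpl in *; lia).
    rewrite Hm in *.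
    destruct (Nat.eq_dec (nv (g ⋅ rr z)) (maxp (g ⋅ rr z) L)) as [E|E].
    + exists [], z, L. simpl. rewrite mulg1. split; [reflexivity|]. simpl in H. lia.
    + pose proof (maxp_ge (g ⋅ rr z) L).
      destruct (IH (g ⋅ rr z)) as [L1 [z' [L2 [E1 [E2 E3]]]]]. lia.
      exists (z :: L1), z', L2. cbn [prod app]. split; [rewrite E1; reflexivity|].
      rewrite <- !gmulA in *. split; assumption.
Qed.

Lemma maxp_zero g L : Forall (fun z => P (snd z)) L -> maxp g L = 0 -> Lam L = 0.
Proof.
  revert g; induction L as [|z L IH]; intros g HF H; simpl in *. reflexivity.
  inversion HF; subst.
  pose proof (maxp_ge (g ⋅ rr z) L).
  assert (E1 : act g v = v) by (apply d_zero; rewrite d_sym; unfold nv in *; lia).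
  assert (E2 : act (g ⋅ rr z) v = v) by (apply d_zero; rewrite d_sym; unfold nv in *; lia).
  rewrite act_mul in E2.
  assert (lam z + lam z = 0).
  { rewrite <- rot_v by assumption. rewrite <- (d_iso g), E1, E2. apply d_refl. }
  rewrite (IH (g ⋅ rr z)); auto; lia.
Qed.

Lemma nv_one : nv 1 = 0.
Proof. unfold nv. rewrite act_one. apply d_refl. Qed.

Definition Good (L : list (G * G)) := Forall (fun z => P (snd z)) L.

Lemma Lam_pos_in L z : In z L -> lam z <= Lam L.
Proof. induction L as [|a L IH]; simpl; [tauto|]. intros [H|H]; [subst; lia|]. specialize (IH H). lia. Qed.

Lemma I1 p1 p2 f1 f2 : gconj (p1 ⋅ gconj p2 (f2 ⋅ ginv f1)) f1 = gconj p1 f1 ⋅ gconj p2 f2.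
Proof. unfold gconj. gsimpl. reflexivity. Qed.
Lemma I2 p2 f2 r : gconj p2 (f2 ⋅ ginv r) ⋅ r = r ⋅ gconj p2 f2.
Proof. unfold gconj. gsimpl. reflexivity. Qed.
Lemma I3 p1 f1 r : r ⋅ gconj p1 (f1 ⋅ r) = gconj p1 f1 ⋅ r.
Proof. unfold gconj. gsimpl. reflexivity. Qed.

Lemma step L : Good L -> act (prod L) v = v -> 0 < Lam L ->
  exists L', Good L' /\ prod L' = prod L /\ 0 < Lam L' /\
    (Lam L' < Lam L \/ (Lam L' = Lam L /\ phi 1 L' < phi 1 L)).
Proof.
  intros HG Hfix Hpos.
  set (D := maxp 1 L).
  assert (HD : 0 < D).
  { destruct (Nat.eq_dec D 0) as [E|E]; [|lia].
    pose proof (maxp_zero 1 L HG E). lia. }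
  destruct (first_max 1 L) as [L1 [x1 [L2 [EL [Hh HDk]]]]].
  { rewrite nv_one. exact HD. }
  fold D in Hh, HDk. rewrite gmul1 in Hh, HDk.
  destruct L2 as [|x2 L3].
  { exfalso. rewrite EL, prod_app in Hfix. simpl in Hfix. rewrite mulg1 in Hfix.
    unfold nv in HDk. rewrite Hfix, d_refl in HDk. lia. }
  set (y := prod L1) in *. set (r1 := rr x1) in *. set (r2 := rr x2).
  assert (Hnext : nv (y ⋅ r1 ⋅ r2) <= D).
  { unfold D. rewrite EL. pose proof (maxp_prefix 1 (L1 ++ [x1; x2]) L3) as M.
    rewrite <- app_assoc in M. simpl in M. rewrite gmul1, prod_app in M. simpl in M.
    rewrite mulg1 in M. rewrite gmulA in M. exact M. }
  assert (Gx : Good (L1 ++ x1 :: x2 :: L3)) by (rewrite <- EL; exact HG).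
  unfold Good in Gx. rewrite Forall_app in Gx. destruct Gx as [GL1 GL2].
  apply Forall_cons_iff in GL2 as [Px1 GL2]. apply Forall_cons_iff in GL2 as [Px2 GL3].
  set (pk1 := act y v). set (pk := act (y ⋅ r1) v). set (pk2 := act (y ⋅ r1 ⋅ r2) v).
  set (u1 := uu x1). set (u2 := uu x2).
  set (q1 := act y u1). set (q2 := act (y ⋅ r1) u2).
  set (a := lam x1). set (b := lam x2).
  assert (E1 : d pk1 q1 = a) by (unfold pk1, q1; rewrite d_iso; reflexivity).
  assert (E2 : d q1 pk = a).
  { unfold q1, pk. rewrite act_mul, d_iso. apply rot_u_v; assumption. }
  assert (E3 : d pk1 pk = a + a).
  { unfold pk1, pk. rewrite act_mul, d_iso. apply rot_v; assumption. }
  assert (F1 : d pk q2 = b) by (unfold pk, q2; rewrite d_iso; reflexivity).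
  assert (F2 : d q2 pk2 = b).
  { unfold q2, pk2. rewrite (act_mul (y ⋅ r1) r2), d_iso. apply rot_u_v; assumption. }
  assert (F3 : d pk pk2 = b + b).
  { unfold pk, pk2. rewrite (act_mul (y ⋅ r1) r2), d_iso. apply rot_v; assumption. }
  assert (Nh : d v pk1 < D) by exact Hh.
  assert (ND : d v pk = D) by exact HDk.
  assert (Nn : d v pk2 <= D) by exact Hnext.
  pose proof (midpoint v pk1 q1 pk a E1 E2 E3) as M1.
  pose proof (midpoint v pk q2 pk2 b F1 F2 F3) as M2.
  pose proof (d_four q1 q2 v pk) as FQ.
  rewrite (d_sym q1 v), (d_sym q2 pk), (d_sym q2 v) in FQ.
  assert (Q12 : d q1 q2 + a <= b \/ d q1 q2 + b <= a) by lia.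
  assert (Hapos : 0 < a).
  { destruct (Nat.eq_dec a 0) as [E|E]; [|lia].
    rewrite E in E3. apply d_zero in E3. rewrite E3 in Nh. lia. }
  assert (Hprod : forall M, prod (L1 ++ M ++ L3) = y ⋅ (prod M ⋅ prod L3)).
  { intro M. rewrite !prod_app. reflexivity. }
  assert (HprodL : prod L = y ⋅ (r1 ⋅ (r2 ⋅ prod L3))).
  { rewrite EL. rewrite prod_app. reflexivity. }
  assert (HLam : forall M, Lam (L1 ++ M ++ L3) = Lam L1 + Lam M + Lam L3).
  { intro M. rewrite !Lam_app. lia. }
  assert (HLamL : Lam L = Lam L1 + (a + (b + 0)) + Lam L3).
  { rewrite EL. change (x1 :: x2 :: L3) with ([x1; x2] ++ L3). rewrite HLam. reflexivity. }
  destruct (lt_eq_lt_dec a b) as [[Hab|Hab]|Hab].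
  -
    set (z1 := (fst x2 ⋅ ginv r1, snd x2)).
    exists (L1 ++ [z1; x1] ++ L3). split; [|split; [|split]].
    + unfold Good. rewrite !Forall_app. repeat split; auto.
    + rewrite Hprod, HprodL. simpl. rewrite mulg1. f_equal.
      rewrite gmulA. f_equal. unfold z1, rr. simpl. fold r1. apply I2.
    + rewrite HLam. simpl. fold a. lia.
    + left. rewrite HLam, HLamL. simpl. fold a.
      assert (Hz : lam z1 = d pk1 q2).
      { unfold lam, uu, z1. simpl. rewrite invM, invK.
        unfold pk1, q2. rewrite (act_mul y r1), d_iso, act_mul. reflexivity. }
      pose proof (d_four pk1 q2 v q1) as FF.
      rewrite (d_sym pk1 v), (d_sym q2 v), (d_sym q2 q1) in FF. lia.
  -
    assert (Hq : q1 = q2) by (apply d_zero; lia).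
    assert (Hu : u1 = u2).
    { unfold q1, q2 in Hq. rewrite act_mul in Hq.
      apply (f_equal (act (ginv y))) in Hq. rewrite !act_inv_l in Hq.
      rewrite <- (act_inv_l r1 u2), <- Hq. unfold r1.
      symmetry. apply rot_fix_inv. assumption. }
    assert (HA : A (fst x2 ⋅ ginv (fst x1))).
    { apply stab. rewrite act_mul. change (act (ginv (fst x1)) v) with u1.
      rewrite Hu. unfold u2, uu. apply act_inv_r. }
    set (z := (fst x1, snd x1 ⋅ gconj (snd x2) (fst x2 ⋅ ginv (fst x1)))).
    exists (L1 ++ [z] ++ L3). split; [|split; [|split]].
    + unfold Good. rewrite !Forall_app. repeat split; auto.
      constructor; auto. unfold z. simpl. apply Pmul; auto.
    + rewrite Hprod, HprodL. simpl. rewrite mulg1. f_equal.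
      rewrite gmulA. f_equal. unfold z, rr. simpl. apply I1.
    + rewrite HLam. simpl. unfold lam at 1, uu at 1. simpl. fold (uu x1). fold (lam x1). fold a. lia.
    + left. rewrite HLam, HLamL. simpl. unfold lam at 1, uu at 1. simpl. fold (uu x1). fold (lam x1). fold a. lia.
  -
    set (z2 := (fst x1 ⋅ r2, snd x1)).
    assert (Hz : lam z2 = d pk2 q1).
    { unfold lam, uu, z2. simpl. rewrite invM, act_mul.
      fold (uu x1). fold u1.
      rewrite <- (d_iso r2), act_inv_r. rewrite <- (d_iso (y ⋅ r1)).
      unfold pk2, q1. rewrite (act_mul (y ⋅ r1) r2). f_equal.
      rewrite act_mul. f_equal. unfold r1. apply rot_fix. assumption. }
    assert (HB : d pk2 q1 <= a) by (pose proof (d_tri pk2 q2 q1) as T; rewrite (d_sym pk2 q2), (d_sym q2 q1) in T; lia).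
    exists (L1 ++ [x2; z2] ++ L3). split; [|split; [|split]].
    + unfold Good. rewrite !Forall_app. repeat split; auto.
    + rewrite Hprod, HprodL. simpl. rewrite mulg1. f_equal.
      rewrite gmulA. f_equal. unfold z2, r1, r2, rr. simpl. apply I3.
    + rewrite HLam. simpl. fold b. rewrite Hz.
      destruct (Nat.eq_dec b 0) as [Eb|Eb]; [|lia].
      rewrite Eb in F3. apply d_zero in F3. rewrite <- F3, d_sym. lia.
    + rewrite HLam, HLamL. simpl. fold b. rewrite Hz.
      destruct (Nat.lt_ge_cases (d pk2 q1) a) as [Hlt|Hge]; [left; lia|right].
      split; [lia|].
      set (t := act y u2). set (N := act (y ⋅ r2) v).
      assert (G1' : d pk1 t = b) by (unfold pk1, t; rewrite d_iso; reflexivity).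
      assert (G2' : d t N = b).
      { unfold t, N. rewrite act_mul, d_iso. apply rot_u_v; assumption. }
      assert (G3' : d pk1 N = b + b).
      { unfold pk1, N. rewrite act_mul, d_iso. apply rot_v; assumption. }
      pose proof (midpoint v pk1 t N b G1' G2' G3') as M3.
      assert (Hqt : d q1 t = d q1 q2).
      { unfold q1, t, q2. rewrite d_iso, act_mul, d_iso.
        unfold r1, u1. rewrite <- (rot_fix x1 Px1) at 2. rewrite d_iso. reflexivity. }
      pose proof (d_four v t q1 pk1) as FF.
      rewrite (d_sym t pk1), (d_sym q1 pk1), (d_sym t q1) in FF.
      assert (HN : d v N < D) by lia.
      rewrite EL, !phi_app. simpl. rewrite !gmul1.
      fold y. fold r1. fold r2.
      assert (Eq : y ⋅ r2 ⋅ rr z2 = y ⋅ r1 ⋅ r2). { rewrite <- !gmulA. f_equal. unfold z2, r1, r2, rr; simpl. apply I3. }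
      rewrite Eq. unfold nv at 2 4. fold pk N. lia.
Qed.

Theorem tree_main L : Good L -> act (prod L) v = v -> Lam L = 0.
Proof.
  intros HG Hfix.
  destruct (Nat.eq_dec (Lam L) 0) as [E|E]; [exact E|exfalso].
  remember (Lam L) as m eqn:Em. remember (phi 1 L) as k eqn:Ek.
  revert L k HG Hfix E Em Ek.
  induction m as [m IHm] using lt_wf_ind.
  intros L k. revert L.
  induction k as [k IHk] using lt_wf_ind.
  intros L HG Hfix E Em Ek.
  destruct (step L HG Hfix) as [L' [G' [P' [Pos' Dec]]]]; [lia|].
  rewrite <- P' in Hfix.
  destruct Dec as [Dec|[Dec1 Dec2]].
  - apply (IHm (Lam L') ltac:(lia) L' (phi 1 L') G' Hfix ltac:(lia) eq_refl eq_refl).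
  - apply (IHk (phi 1 L') ltac:(lia) L' G' Hfix ltac:(lia) ltac:(lia) eq_refl).
Qed.

End TreeLemma.

Section Concrete.
Variable G : Group.
Notation "x ⋅ y" := (@gmul G x y) (at level 40, left associativity).
Notation "1" := (@gone G).
Variables A B : G -> Prop.
Hypothesis HA : subgroup A.
Hypothesis HB : subgroup B.

Definition C (x : G) : Prop := A x /\ B x.

Lemma A1 : A 1. Proof. apply HA. Qed.
Lemma Amul x y : A x -> A y -> A (x ⋅ y). Proof. apply HA. Qed.
Lemma Ainv x : A x -> A (ginv x). Proof. apply HA. Qed.
Lemma B1 : B 1. Proof. apply HB. Qed.
Lemma Bmul x y : B x -> B y -> B (x ⋅ y). Proof. apply HB. Qed.
Lemma Binv x : B x -> B (ginv x). Proof. apply HB. Qed.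
Lemma C1 : C 1. Proof. split; [apply A1|apply B1]. Qed.
Lemma Cmul x y : C x -> C y -> C (x ⋅ y).
Proof. intros [] []; split; [apply Amul|apply Bmul]; auto. Qed.
Lemma Cinv x : C x -> C (ginv x).
Proof. intros []; split; [apply Ainv|apply Binv]; auto. Qed.
Lemma Ainv_iff x : A (ginv x) -> A x.
Proof. intro H. rewrite <- (invK G x). apply Ainv; auto. Qed.
Lemma Cinv_iff x : C (ginv x) -> C x.
Proof. intro H. rewrite <- (invK G x). apply Cinv; auto. Qed.
Lemma CA x : C x -> A x. Proof. intros []; auto. Qed.
Lemma CB x : C x -> B x. Proof. intros []; auto. Qed.

Definition dec (Q : Prop) : {Q} + {~ Q} := excluded_middle_informative Q.

Definition repP (g : G) : G -> Prop := fun y => C (ginv g ⋅ y) /\ (C g -> y = 1).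
Definition rep (g : G) : G := epsilon (inhabits (@gone G)) (repP g).

Lemma rep_spec g : repP g (rep g).
Proof.
  unfold rep. apply epsilon_spec. destruct (classic (C g)) as [Hc|Hc].
  - exists 1. split; [|auto]. rewrite mulg1. apply Cinv; auto.
  - exists g. split; [|tauto]. rewrite gmulV. apply C1.
Qed.

Lemma rep_in g : C (ginv g ⋅ rep g). Proof. apply rep_spec. Qed.
Lemma rep_C g : C g -> rep g = 1. Proof. apply rep_spec. Qed.

Lemma rep_mulC g c : C c -> rep (g ⋅ c) = rep g.
Proof.
  intro Hc. unfold rep. f_equal. apply functional_extensionality. intro y.
  apply propositional_extensionality. unfold repP.
  rewrite invM.
  split; intros [H1 H2]; split.
  - replace (ginv g ⋅ y) with (c ⋅ (ginv c ⋅ ginv g ⋅ y)) by (gsimpl; reflexivity).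
    apply Cmul; auto.
  - intro Hg. apply H2. apply Cmul; auto.
  - rewrite <- gmulA. apply Cmul; [apply Cinv|]; auto.
  - intro Hg. apply H2. replace g with (g ⋅ c ⋅ ginv c) by (gsimpl; reflexivity).
    apply Cmul; [|apply Cinv]; auto.
Qed.

Lemma rep_eq_of g g' : C (ginv g ⋅ g') -> rep g' = rep g.
Proof.
  intro H. replace g' with (g ⋅ (ginv g ⋅ g')) by (gsimpl; reflexivity).
  apply rep_mulC; auto.
Qed.

Lemma rep_eq_C g g' : rep g = rep g' -> C (ginv g ⋅ g').
Proof.
  intro E. pose proof (rep_in g) as H1. pose proof (rep_in g') as H2. rewrite <- E in H2.
  replace (ginv g ⋅ g') with ((ginv g ⋅ rep g) ⋅ ginv (ginv g' ⋅ rep g)) by (gsimpl; reflexivity).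
  apply Cmul; [|apply Cinv]; auto.
Qed.

Lemma rep_idem g : rep (rep g) = rep g.
Proof. apply rep_eq_of. apply rep_in. Qed.

Lemma rep_A g : A g -> A (rep g).
Proof.
  intro H. replace (rep g) with (g ⋅ (ginv g ⋅ rep g)) by (gsimpl; reflexivity).
  apply Amul; auto. apply CA, rep_in.
Qed.
Lemma rep_B g : B g -> B (rep g).
Proof.
  intro H. replace (rep g) with (g ⋅ (ginv g ⋅ rep g)) by (gsimpl; reflexivity).
  apply Bmul; auto. apply CB, rep_in.
Qed.
Lemma rep_notC g : ~ C g -> ~ C (rep g).
Proof.
  intros H Hr. apply H. replace g with (rep g ⋅ ginv (ginv g ⋅ rep g)) by (gsimpl; reflexivity).
  apply Cmul; [|apply Cinv]; auto. apply rep_in.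
Qed.
Lemma rep_state g : C (ginv (rep g) ⋅ g).
Proof.
  replace (ginv (rep g) ⋅ g) with (ginv (ginv g ⋅ rep g)) by (gsimpl; reflexivity).
  apply Cinv, rep_in.
Qed.

Fixpoint push (g : G) (l : list G) : list G :=
  match l with
  | [] => []
  | s :: l' => rep (g ⋅ s) :: push (ginv (rep (g ⋅ s)) ⋅ (g ⋅ s)) l'
  end.

Lemma push_length g l : length (push g l) = length l.
Proof. revert g; induction l; intro g; simpl; auto. Qed.

Lemma push_mul g h l : push g (push h l) = push (g ⋅ h) l.
Proof.
  revert g h; induction l as [|s l IH]; intros g h; simpl; auto.
  assert (E : rep (g ⋅ rep (h ⋅ s)) = rep (g ⋅ h ⋅ s)).
  { replace (g ⋅ rep (h ⋅ s)) with (g ⋅ h ⋅ s ⋅ (ginv (h ⋅ s) ⋅ rep (h ⋅ s))) by (gsimpl; reflexivity).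
    apply rep_mulC. apply rep_in. }
  rewrite E, IH.
  f_equal. f_equal. gsimpl. reflexivity.
Qed.

Definition Reps (l : list G) := Forall (fun s => rep s = s) l.

Lemma push_Reps g l : Reps (push g l).
Proof.
  revert g; induction l as [|s l IH]; intro g; simpl; constructor; [apply rep_idem|apply IH].
Qed.

Lemma push_one l : Reps l -> push 1 l = l.
Proof.
  induction l as [|s l IH]; intro H; simpl; auto.
  inversion H; subst. rewrite gmul1, H2, gmulV, IH; auto.
Qed.

Definition NoC (l : list G) := Forall (fun s => ~ C s) l.

Lemma push_NoC c l : C c -> NoC l -> NoC (push c l).
Proof.
  revert c; induction l as [|s l IH]; intros c Hc H; simpl; constructor; inversion H; subst.
  - apply rep_notC. intro Hm. apply H2. replace s with (ginv c ⋅ (c ⋅ s)) by (gsimpl; reflexivity).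
    apply Cmul; [apply Cinv|]; auto.
  - apply IH; auto. apply rep_state.
Qed.

Definition NoCt (l : list G) := NoC (tl l).
Lemma push_NoCt g l : NoCt l -> NoCt (push g l).
Proof.
  destruct l as [|s l]; simpl; unfold NoCt; simpl; auto. intro H. apply push_NoC; auto. apply rep_state.
Qed.

Fixpoint TA (l : list G) : Prop :=
  match l with [] => True | s :: l' => A s /\ TB l' end
with TB (l : list G) : Prop :=
  match l with [] => False | s :: l' => B s /\ TA l' end.

Lemma push_T_C l : forall c, C c -> (TA l -> TA (push c l)) /\ (TB l -> TB (push c l)).
Proof.
  induction l as [|s l IH]; intros c Hc; simpl; split; auto.
  - intros [Hs Hl]. split.
    + apply rep_A. apply Amul; auto. apply CA; auto.
    + apply IH; auto. apply rep_state.
  - intros [Hs Hl]. split.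
    + apply rep_B. apply Bmul; auto. apply CB; auto.
    + apply IH; auto. apply rep_state.
Qed.
Lemma push_TA_C c l : C c -> TA l -> TA (push c l).
Proof. intros. apply push_T_C; auto. Qed.
Lemma push_TB_C c l : C c -> TB l -> TB (push c l).
Proof. intros. apply push_T_C; auto. Qed.

Lemma push_TA g l : A g -> TA l -> TA (push g l).
Proof.
  intros Hg H. destruct l as [|s l]; simpl in *; auto.
  destruct H as [Hs Hl]. split.
  - apply rep_A. apply Amul; auto.
  - apply push_TB_C; auto. apply rep_state.
Qed.

Lemma push_TB g l : B g -> TB l -> TB (push g l).
Proof.
  intros Hg H. destruct l as [|s l]; simpl in *; auto.
  destruct H as [Hs Hl]. split.
  - apply rep_B. apply Bmul; auto.
  - apply push_TA_C; auto. apply rep_state.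
Qed.

Definition flip (l : list G) : list G :=
  match l with
  | s :: r => if dec (C s) then r else 1 :: l
  | [] => [1]
  end.

Lemma rep_C_eq s : rep s = s -> C s -> s = 1.
Proof. intros E H. rewrite <- E. apply rep_C; auto. Qed.

Lemma flip_flip l : Reps l -> NoCt l -> flip (flip l) = l.
Proof.
  intros HR HN. destruct l as [|s r]; simpl.
  - destruct (dec (C 1)) as [_|n]; [reflexivity|exfalso; apply n, C1].
  - destruct (dec (C s)) as [Hs|Hs].
    + inversion HR; subst. assert (s = 1) by (apply rep_C_eq; auto). subst.
      destruct r as [|t r]; simpl; auto.
      destruct (dec (C t)) as [Ht|Ht]; auto.
      exfalso. unfold NoCt in HN. simpl in HN. inversion HN; subst. auto.
    + simpl. destruct (dec (C 1)) as [_|n]; [reflexivity|exfalso; apply n, C1].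
Qed.

Lemma flip_Reps l : Reps l -> Reps (flip l).
Proof.
  intros HR. destruct l as [|s r]; simpl.
  - constructor; [|constructor]. apply rep_C, C1.
  - destruct (dec (C s)); [inversion HR; auto|]. constructor; auto. apply rep_C, C1.
Qed.

Lemma flip_NoCt l : NoCt l -> NoCt (flip l).
Proof.
  unfold NoCt. intros HN. destruct l as [|s r]; simpl in *.
  - constructor.
  - destruct (dec (C s)) as [Hs|Hs]; simpl.
    + destruct r; simpl; [constructor|]. inversion HN; auto.
    + constructor; auto.
Qed.

Lemma flip_TA l : Reps l -> TA l -> TB (flip l).
Proof.
  intros HR H. destruct l as [|s r]; simpl in *.
  - split; [apply B1|auto].
  - destruct H as [Hs Hr]. destruct (dec (C s)); simpl; auto.
    split; [apply B1|]. split; auto.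
Qed.

Lemma flip_TB l : Reps l -> TB l -> TA (flip l).
Proof.
  intros HR H. destruct l as [|s r]; simpl in *; [contradiction|].
  destruct H as [Hs Hr]. destruct (dec (C s)); simpl; auto.
  split; [apply A1|]. split; auto.
Qed.

Fixpoint ev (l : list G) : G := match l with [] => 1 | s :: l' => s ⋅ ev l' end.

Lemma ev_push_A g l : A g -> exists a, A a /\ ev (push g l) = g ⋅ ev l ⋅ a.
Proof.
  revert g; induction l as [|s l IH]; intros g Hg; simpl.
  - exists (ginv g). split; [apply Ainv; auto|]. gsimpl. reflexivity.
  - destruct (IH (ginv (rep (g ⋅ s)) ⋅ (g ⋅ s))) as [a [Ha E]].
    { apply CA, rep_state. }
    exists a. split; auto. rewrite E. gsimpl. reflexivity.
Qed.

Lemma ev_push_cons g s l : exists a, A a /\ ev (push g (s :: l)) = g ⋅ ev (s :: l) ⋅ a.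
Proof.
  simpl. destruct (ev_push_A (ginv (rep (g ⋅ s)) ⋅ (g ⋅ s)) l) as [a [Ha E]].
  { apply CA, rep_state. }
  exists a. split; auto. rewrite E. gsimpl. reflexivity.
Qed.

Lemma ev_flip l : Reps l -> ev (flip l) = ev l.
Proof.
  intro HR. destruct l as [|s r]; simpl.
  - rewrite gmul1. reflexivity.
  - destruct (dec (C s)) as [Hs|Hs]; simpl.
    + inversion HR; subst. assert (s = 1) by (apply rep_C_eq; auto). subst. rewrite gmul1. reflexivity.
    + rewrite gmul1. reflexivity.
Qed.


Fixpoint lcp (l l' : list G) : nat :=
  match l, l' with
  | s :: r, s' :: r' => if dec (s = s') then S (lcp r r') else 0
  | _, _ => 0
  end.

Definition dist (l l' : list G) : nat := length l + length l' - 2 * lcp l l'.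

Lemma lcp_le l l' : lcp l l' <= length l /\ lcp l l' <= length l'.
Proof.
  revert l'; induction l as [|s r IH]; intros [|s' r']; simpl; try lia.
  destruct (dec (s = s')); simpl; [specialize (IH r'); lia|lia].
Qed.

Lemma lcp_sym l l' : lcp l l' = lcp l' l.
Proof.
  revert l'; induction l as [|s r IH]; intros [|s' r']; simpl; auto.
  destruct (dec (s = s')), (dec (s' = s)); subst; try congruence; try reflexivity; try (rewrite IH; auto).
Qed.

Lemma lcp_self l : lcp l l = length l.
Proof. induction l as [|s r IH]; simpl; auto. destruct (dec (s = s)); [rewrite IH|]; auto; congruence. Qed.

Lemma lcp_full l l' : lcp l l' = length l -> length l = length l' -> l = l'.
Proof.
  revert l'; induction l as [|s r IH]; intros [|s' r']; simpl; intros H1 H2; try lia; auto.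
  destruct (dec (s = s')); simpl in *; [|lia]. subst. f_equal. apply IH; lia.
Qed.

Lemma lcp_ultra x y z : Nat.min (lcp x y) (lcp y z) <= lcp x z.
Proof.
  revert y z; induction x as [|s r IH]; intros [|s' r'] [|s'' r'']; simpl; try lia.
  destruct (dec (s = s')), (dec (s' = s'')), (dec (s = s'')); subst; try congruence; simpl; try lia.
  specialize (IH r' r''). lia.
Qed.

Lemma dist_sym x y : dist x y = dist y x.
Proof. unfold dist. rewrite lcp_sym. lia. Qed.
Lemma dist_refl x : dist x x = 0.
Proof. unfold dist. rewrite lcp_self. lia. Qed.
Lemma dist_zero x y : dist x y = 0 -> x = y.
Proof.
  unfold dist. intro H. pose proof (lcp_le x y). apply lcp_full; lia.
Qed.
Lemma dist_tri x y z : dist x z <= dist x y + dist y z.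
Proof.
  unfold dist. pose proof (lcp_le x y). pose proof (lcp_le y z). pose proof (lcp_le x z).
  pose proof (lcp_ultra x y z). lia.
Qed.
Lemma tri_eq p q r : Nat.min p q <= r -> Nat.min p r <= q -> Nat.min q r <= p -> q <= p -> r <= p -> q = r.
Proof. lia. Qed.

Lemma lcp_ultra' x y z : Nat.min (lcp x y) (lcp y z) <= lcp x z.
Proof. apply lcp_ultra. Qed.

Lemma four_core x y z w :
  lcp x z <= lcp x y -> lcp x w <= lcp x y -> lcp y z <= lcp x y -> lcp y w <= lcp x y ->
  lcp x z + lcp y w = lcp x w + lcp y z /\ lcp x z + lcp y w <= lcp x y + lcp z w.
Proof.
  intros H1 H2 H3 H4.
  assert (E1 : lcp x z = lcp y z).
  { apply (tri_eq (lcp x y)); auto.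
    - pose proof (lcp_ultra' y x z) as U. rewrite (lcp_sym y x) in U. exact U.
    - exact (lcp_ultra' x y z).
    - pose proof (lcp_ultra' x z y) as U. rewrite (lcp_sym z y) in U. exact U. }
  assert (E2 : lcp x w = lcp y w).
  { apply (tri_eq (lcp x y)); auto.
    - pose proof (lcp_ultra' y x w) as U. rewrite (lcp_sym y x) in U. exact U.
    - exact (lcp_ultra' x y w).
    - pose proof (lcp_ultra' x w y) as U. rewrite (lcp_sym w y) in U. exact U. }
  pose proof (lcp_ultra' z x w) as U. rewrite (lcp_sym z x) in U.
  split; [lia|]. rewrite <- E2.
  destruct (Nat.le_ge_cases (lcp x z) (lcp x w)); lia.
Qed.

Lemma dist_eq x y : dist x y + 2 * lcp x y = length x + length y.
Proof. unfold dist. pose proof (lcp_le x y). lia. Qed.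

Lemma max_or a b : Nat.max a b = a \/ Nat.max a b = b.
Proof. lia. Qed.

Lemma max6 (a b c d e f : nat) : exists m, a <= m /\ b <= m /\ c <= m /\ d <= m /\ e <= m /\ f <= m /\
  (m = a \/ m = b \/ m = c \/ m = d \/ m = e \/ m = f).
Proof.
  exists (Nat.max (Nat.max (Nat.max a b) (Nat.max c d)) (Nat.max e f)).
  repeat split; try lia.
Qed.

Lemma dist_four x y z w : dist x y + dist z w <= Nat.max (dist x z + dist y w) (dist x w + dist y z).
Proof.
  assert (K : lcp x z + lcp y w <= lcp x y + lcp z w \/ lcp x w + lcp y z <= lcp x y + lcp z w).
  { destruct (max6 (lcp x y) (lcp z w) (lcp x z) (lcp y w) (lcp x w) (lcp y z))
      as [m [H1 [H2 [H3 [H4 [H5 [H6 [E|[E|[E|[E|[E|E]]]]]]]]]]]]; subst m.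
    - destruct (four_core x y z w); auto; lia.
    - destruct (four_core z w x y); rewrite ?(lcp_sym z x), ?(lcp_sym w y), ?(lcp_sym z y), ?(lcp_sym w x) in *; auto; try lia.
    - destruct (four_core x z y w); rewrite ?(lcp_sym z y), ?(lcp_sym w z), ?(lcp_sym z w) in *; auto; try lia.
    - destruct (four_core y w x z); rewrite ?(lcp_sym y x), ?(lcp_sym w x), ?(lcp_sym w z), ?(lcp_sym y z) in *; auto; try lia.
    - destruct (four_core x w y z); rewrite ?(lcp_sym w y), ?(lcp_sym w z), ?(lcp_sym z w) in *; auto; try lia.
    - destruct (four_core y z x w); rewrite ?(lcp_sym y x), ?(lcp_sym z x), ?(lcp_sym y w), ?(lcp_sym z w) in *; auto; try lia. }
  pose proof (dist_eq x y). pose proof (dist_eq z w). pose proof (dist_eq x z).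
  pose proof (dist_eq y w). pose proof (dist_eq x w). pose proof (dist_eq y z).
  lia.
Qed.

Lemma rep_inj_mul g s s' : rep s = s -> rep s' = s' -> rep (g ⋅ s) = rep (g ⋅ s') -> s = s'.
Proof.
  intros Hs Hs' E. apply rep_eq_C in E. rewrite invM in E.
  replace (ginv s ⋅ ginv g ⋅ (g ⋅ s')) with (ginv s ⋅ s') in E by (gsimpl; reflexivity).
  rewrite <- Hs, <- Hs'. symmetry. apply rep_eq_of. exact E.
Qed.

Lemma lcp_push g l l' : Reps l -> Reps l' -> lcp (push g l) (push g l') = lcp l l'.
Proof.
  revert g l'; induction l as [|s r IH]; intros g [|s' r'] H H'; simpl; auto.
  inversion H; inversion H'; subst.
  destruct (dec (s = s')) as [E|E].
  - subst. destruct (dec (rep (g ⋅ s') = rep (g ⋅ s'))) as [_|n]; [|congruence].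
    f_equal. apply IH; auto.
  - destruct (dec (rep (g ⋅ s) = rep (g ⋅ s'))) as [E'|_]; auto.
    exfalso. apply E. apply (rep_inj_mul g); auto.
Qed.

Lemma dist_push g l l' : Reps l -> Reps l' -> dist (push g l) (push g l') = dist l l'.
Proof. intros. unfold dist. rewrite lcp_push, !push_length; auto. Qed.

Lemma C_one_ne t : ~ C t -> 1 <> t.
Proof. intros H E. apply H. rewrite <- E. apply C1. Qed.

Lemma dist_flip l l' : Reps l -> Reps l' -> NoCt l -> NoCt l' -> dist (flip l) (flip l') = dist l l'.
Proof.
  intros R R' N N'.
  pose proof (dist_eq (flip l) (flip l')) as E1. pose proof (dist_eq l l') as E2.
  revert E1 E2. generalize (dist (flip l) (flip l')) (dist l l'). intros D1 D2 E1 E2.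
  destruct l as [|s r]; destruct l' as [|s' r']; simpl in *.
  - destruct (dec (1 = 1)); [|congruence]. simpl in *. lia.
  - destruct (dec (C s')) as [Hs'|Hs']; simpl in *.
    + destruct r' as [|t r']; simpl in *; [lia|].
      destruct (dec (1 = t)) as [E|E]; [|simpl in *; lia].
      exfalso. unfold NoCt in N'. simpl in N'. inversion N'. apply (C_one_ne t); auto.
    + destruct (dec (1 = 1)); [|congruence]. simpl in *. lia.
  - destruct (dec (C s)) as [Hs|Hs]; simpl in *.
    + destruct r as [|t r]; simpl in *; [lia|].
      destruct (dec (t = 1)) as [E|E]; [|simpl in *; lia].
      exfalso. unfold NoCt in N. simpl in N. inversion N. apply (C_one_ne t); auto.
    + destruct (dec (1 = 1)); [|congruence]. simpl in *. lia.
  - inversion R; inversion R'; subst.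
    destruct (dec (C s)) as [Hs|Hs]; destruct (dec (C s')) as [Hs'|Hs']; simpl in *.
    + assert (s = 1) by (apply rep_C_eq; auto). assert (s' = 1) by (apply rep_C_eq; auto). subst.
      destruct (dec (1 = 1)); [|congruence]. simpl in *. lia.
    + destruct (dec (s = s')) as [E|E]; [subst; contradiction|].
      destruct r as [|t r]; simpl in *; [lia|].
      destruct (dec (t = 1)) as [E'|E']; [|simpl in *; lia].
      exfalso. unfold NoCt in N. simpl in N. inversion N. apply (C_one_ne t); auto.
    + destruct (dec (s = s')) as [E|E]; [subst; contradiction|].
      destruct r' as [|t r']; simpl in *; [lia|].
      destruct (dec (1 = t)) as [E'|E']; [|simpl in *; lia].
      exfalso. unfold NoCt in N'. simpl in N'. inversion N'. apply (C_one_ne t); auto.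
    + destruct (dec (1 = 1)); [|congruence]. simpl in *. lia.
Qed.

Lemma push_C_flip c l : C c -> Reps l -> NoCt l -> flip (push c (flip l)) = push c l.
Proof.
  intros Hc R N. destruct l as [|s r]; simpl.
  - rewrite mulg1, rep_C; auto. destruct (dec (C 1)) as [_|n]; [reflexivity|exfalso; apply n, C1].
  - destruct (dec (C s)) as [Hs|Hs].
    + inversion R; subst. assert (s = 1) by (apply rep_C_eq; auto). subst.
      rewrite mulg1, rep_C, inv1, gmul1; auto.
      destruct r as [|t r]; simpl; auto.
      destruct (dec (C (rep (c ⋅ t)))) as [Ht|Ht]; auto.
      exfalso. unfold NoCt in N. simpl in N. inversion N as [|? ? Hnt ?]; subst.
      apply (rep_notC (c ⋅ t)); auto. intro Hm. apply Hnt.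
      replace t with (ginv c ⋅ (c ⋅ t)) by (gsimpl; reflexivity). apply Cmul; [apply Cinv|]; auto.
    + simpl. rewrite mulg1, rep_C, inv1, gmul1; auto.
      destruct (dec (C 1)) as [_|n]; [reflexivity|exfalso; apply n, C1].
Qed.

Variable P : G -> Prop.
Hypothesis HP : normal_subsemigroup A P.
Hypothesis HPC : forall x, P x -> ~ (A x /\ B x).

Definition Valid (l : list G) : Prop := Reps l /\ NoCt l /\ TA l.

Lemma dist_nil l : dist [] l = length l.
Proof. unfold dist. simpl. lia. Qed.

Lemma rot_push p l : P p -> Valid l -> dist l (push p l) = dist [] l + dist [] l.
Proof.
  intros Hp [R [N T]]. rewrite !dist_nil. destruct l as [|s r]; [reflexivity|].
  pose proof (dist_eq (s :: r) (push p (s :: r))) as E. revert E.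
  generalize (dist (s :: r) (push p (s :: r))). intros D E.
  simpl in E. rewrite push_length in E. simpl.
  destruct (dec (s = rep (p ⋅ s))) as [Es|Es]; [|simpl in E; lia].
  exfalso. inversion R; subst. simpl in T. destruct T as [As _].
  apply (HPC (gconj p s)).
  - apply HP; auto.
  - apply rep_eq_C. unfold gconj. rewrite H1, <- Es. reflexivity.
Qed.

Definition X := {l : list G | Valid l}.
Definition dX (x y : X) : nat := dist (proj1_sig x) (proj1_sig y).

Lemma sig_eqX (x y : X) : proj1_sig x = proj1_sig y -> x = y.
Proof. destruct x, y; simpl; intro; subst; f_equal; apply proof_irrelevance. Qed.

Record perm := Perm {
  pf : X -> X; pb : X -> X;
  pfb : forall x, pf (pb x) = x; pbf : forall x, pb (pf x) = x;
  piso : forall x y, dX (pf x) (pf y) = dX x y;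
  pg : G;
  pev : forall x, exists a, A a /\ ev (proj1_sig (pf x)) = pg ⋅ ev (proj1_sig x) ⋅ a }.

Lemma perm_eq (p q : perm) : pf p = pf q -> pb p = pb q -> pg p = pg q -> p = q.
Proof.
  destruct p, q; simpl; intros; subst. f_equal; apply proof_irrelevance.
Qed.

Definition pmul (p q : perm) : perm.
Proof.
  refine (Perm (fun x => pf p (pf q x)) (fun x => pb q (pb p x)) _ _ _ (pg p ⋅ pg q) _).
  - intro x. rewrite pfb, pfb. reflexivity.
  - intro x. rewrite pbf, pbf. reflexivity.
  - intros x y. rewrite !piso. reflexivity.
  - intro x. destruct (pev q x) as [a1 [H1 E1]]. destruct (pev p (pf q x)) as [a2 [H2 E2]].
    exists (a1 ⋅ a2). split; [apply Amul; auto|]. rewrite E2, E1. gsimpl. reflexivity.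
Defined.

Definition pone : perm.
Proof.
  refine (Perm (fun x => x) (fun x => x) _ _ _ 1 _); auto.
  intro x. exists 1. split; [apply A1|]. gsimpl. reflexivity.
Defined.

Definition pinv (p : perm) : perm.
Proof.
  refine (Perm (pb p) (pf p) (pbf p) (pfb p) _ (ginv (pg p)) _).
  - intros x y. rewrite <- (piso p), !pfb. reflexivity.
  - intro x. destruct (pev p (pb p x)) as [a [Ha E]]. rewrite pfb in E.
    exists (ginv a). split; [apply Ainv; auto|]. rewrite E. gsimpl. reflexivity.
Defined.

Lemma pmulA p q r : pmul p (pmul q r) = pmul (pmul p q) r.
Proof. apply perm_eq; simpl; auto. apply gmulA. Qed.
Lemma pmul1 p : pmul pone p = p.
Proof. apply perm_eq; simpl; auto. apply gmul1. Qed.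
Lemma pmulV p : pmul (pinv p) p = pone.
Proof.
  apply perm_eq; simpl.
  - apply functional_extensionality. intro. apply pbf.
  - apply functional_extensionality. intro. apply pbf.
  - apply gmulV.
Qed.

Definition PG : Group := Build_Group perm pmul pone pinv pmulA pmul1 pmulV.

Lemma valid_pushA a l : A a -> Valid l -> Valid (push a l).
Proof.
  intros Ha [R [N T]]. split; [apply push_Reps|split; [apply push_NoCt; auto|apply push_TA; auto]].
Qed.

Definition bact (b : G) (l : list G) : list G := flip (push b (flip l)).

Lemma valid_bact b l : B b -> Valid l -> Valid (bact b l).
Proof.
  intros Hb [R [N T]]. unfold bact. split; [|split].
  - apply flip_Reps, push_Reps.
  - apply flip_NoCt, push_NoCt, flip_NoCt; auto.
  - apply flip_TB; [apply push_Reps|]. apply push_TB; auto. apply flip_TA; auto.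
Qed.

Lemma bact_mul b b' l : Valid l -> bact b (bact b' l) = bact (b ⋅ b') l.
Proof.
  intros [R [N T]]. unfold bact. rewrite flip_flip.
  - rewrite push_mul. reflexivity.
  - apply push_Reps.
  - apply push_NoCt, flip_NoCt; auto.
Qed.

Lemma bact_one l : Valid l -> bact 1 l = l.
Proof.
  intros [R [N T]]. unfold bact. rewrite push_one; [|apply flip_Reps; auto]. apply flip_flip; auto.
Qed.

Lemma pushA_one l : Valid l -> push 1 l = l.
Proof. intros [R _]. apply push_one; auto. Qed.

Definition mkA (a : G) (Ha : A a) : perm.
Proof.
  refine (Perm (fun x => exist _ (push a (proj1_sig x)) (valid_pushA a _ Ha (proj2_sig x)))
               (fun x => exist _ (push (ginv a) (proj1_sig x)) (valid_pushA (ginv a) _ (Ainv a Ha) (proj2_sig x)))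
               _ _ _ a _).
  - intro x. apply sig_eqX. simpl. rewrite push_mul, mulgV. apply pushA_one, proj2_sig.
  - intro x. apply sig_eqX. simpl. rewrite push_mul, gmulV. apply pushA_one, proj2_sig.
  - intros [l [R ?]] [l' [R' ?]]. unfold dX. simpl. apply dist_push; auto.
  - intro x. simpl. apply ev_push_A; auto.
Defined.

Definition mkB (b : G) (Hb : B b) : perm.
Proof.
  refine (Perm (fun x => exist _ (bact b (proj1_sig x)) (valid_bact b _ Hb (proj2_sig x)))
               (fun x => exist _ (bact (ginv b) (proj1_sig x)) (valid_bact (ginv b) _ (Binv b Hb) (proj2_sig x)))
               _ _ _ b _).
  - intro x. apply sig_eqX. simpl. rewrite bact_mul, mulgV. apply bact_one, proj2_sig. apply proj2_sig.
  - intro x. apply sig_eqX. simpl. rewrite bact_mul, gmulV. apply bact_one, proj2_sig. apply proj2_sig.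
  - intros x y. unfold dX. simpl. destruct x as [l [R [N T]]], y as [l' [R' [N' T']]]. simpl.
    unfold bact. rewrite dist_flip, dist_push, dist_flip; auto;
      try apply flip_Reps; try apply push_Reps; try apply push_NoCt; try apply flip_NoCt; auto.
  - intro x. destruct x as [l [R [N T]]]. simpl. unfold bact.
    rewrite ev_flip by apply push_Reps.
    destruct (flip l) as [|s r] eqn:Ef.
    + exfalso. destruct l as [|s0 r0]; simpl in Ef; [discriminate|].
      destruct (dec (C s0)); [|discriminate]. subst r0. simpl in T. tauto.
    + destruct (ev_push_cons b s r) as [a [Ha E]]. exists a. split; auto.
      rewrite E, <- Ef, ev_flip; auto.
Defined.

Definition phiF (g : G) : PG := match dec (A g) with left H => mkA g H | right _ => pone end.
Definition psiF (g : G) : PG := match dec (B g) with left H => mkB g H | right _ => pone end.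

Lemma phiF_A g (H : A g) : phiF g = mkA g H.
Proof. unfold phiF. destruct (dec (A g)) as [H'|n]; [|contradiction]. f_equal. apply proof_irrelevance. Qed.
Lemma psiF_B g (H : B g) : psiF g = mkB g H.
Proof. unfold psiF. destruct (dec (B g)) as [H'|n]; [|contradiction]. f_equal. apply proof_irrelevance. Qed.

Lemma phiF_mul x y : A x -> A y -> phiF (x ⋅ y) = @gmul PG (phiF x) (phiF y).
Proof.
  intros Hx Hy. rewrite (phiF_A x Hx), (phiF_A y Hy), (phiF_A (x ⋅ y) (Amul x y Hx Hy)).
  apply perm_eq; simpl.
  - apply functional_extensionality. intro z. apply sig_eqX. simpl. rewrite push_mul. reflexivity.
  - apply functional_extensionality. intro z. apply sig_eqX. simpl. rewrite push_mul, invM. reflexivity.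
  - reflexivity.
Qed.

Lemma psiF_mul x y : B x -> B y -> psiF (x ⋅ y) = @gmul PG (psiF x) (psiF y).
Proof.
  intros Hx Hy. rewrite (psiF_B x Hx), (psiF_B y Hy), (psiF_B (x ⋅ y) (Bmul x y Hx Hy)).
  apply perm_eq; simpl.
  - apply functional_extensionality. intro z. apply sig_eqX. simpl. rewrite bact_mul; [reflexivity|].
    apply proj2_sig.
  - apply functional_extensionality. intro z. apply sig_eqX. simpl. rewrite bact_mul, invM; [reflexivity|].
    apply proj2_sig.
  - reflexivity.
Qed.

Lemma phi_psi_C c : A c -> B c -> phiF c = psiF c.
Proof.
  intros Ha Hb. rewrite (phiF_A c Ha), (psiF_B c Hb).
  apply perm_eq; simpl.
  - apply functional_extensionality. intros [l [R [N T]]]. apply sig_eqX. simpl. unfold bact.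
    symmetry. apply push_C_flip; auto. split; auto.
  - apply functional_extensionality. intros [l [R [N T]]]. apply sig_eqX. simpl. unfold bact.
    symmetry. apply push_C_flip; auto. apply Cinv. split; auto.
  - reflexivity.
Qed.
End Concrete.

Lemma prod_iprod (G : Group) (n : nat) (dd ff : nat -> G) :
  prod G (map (fun i => (ff i, dd i)) (seq 0 n)) = iprod n (fun i => gconj (dd i) (ff i)).
Proof.
  induction n as [|n IH]; [reflexivity|].
  rewrite seq_S, map_app, prod_app, IH. simpl. rewrite mulg1. reflexivity.
Qed.

Theorem mainTheorem16 (G : Group) (A B P : G -> Prop)
  (HG : is_amalgamated_free_product G A B)
  (HP : normal_subsemigroup A P)
  (HPC : forall x, P x -> ~ (A x /\ B x))
  (n : nat) (d f : nat -> G)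
  (Hn : 1 <= n)
  (Hd : forall i, i < n -> P (d i))
  (Hf : forall i, i < n -> ~ A (f i)) :
  ~ A (iprod n (fun i => gconj (d i) (f i))).
Proof.
  intro Hx.
  destruct HG as [HA [HB UP]].
  destruct (UP (PG G A B HA) (phiF G A B HA HB) (psiF G A B HA HB)
              (phiF_mul G A B HA HB) (psiF_mul G A B HA HB) (phi_psi_C G A B HA HB))
    as [h [Hh [HhA [HhB _]]]].
  destruct (UP G (fun x => x) (fun x => x) (fun _ _ _ _ => eq_refl) (fun _ _ _ _ => eq_refl)
              (fun _ _ _ => eq_refl)) as [h0 [_ [_ [_ Uniq]]]].
  assert (Hpi : forall x, pg G A B (h x) = x).
  { intro x. rewrite (Uniq (fun x => pg G A B (h x))).
    - symmetry. apply (Uniq (fun x => x)); auto. intros a b. reflexivity.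
    - intros a b. rewrite Hh. reflexivity.
    - intros a Ha. rewrite HhA by auto. rewrite (phiF_A G A B HA HB a Ha). reflexivity.
    - intros b Hb. rewrite HhB by auto. rewrite (psiF_B G A B HA HB b Hb). reflexivity. }
  set (act := fun g (x : X G A B) => pf G A B (h g) x).
  assert (act_mul : forall g k x, act (gmul g k) x = act g (act k x)).
  { intros. unfold act. rewrite Hh. reflexivity. }
  assert (h1 : h gone = pone G A B HA).
  { apply (idem_one (PG G A B HA)). rewrite <- Hh, gmul1. reflexivity. }
  assert (act_one : forall x, act gone x = x).
  { intros. unfold act. rewrite h1. reflexivity. }
  assert (Vnil : Valid G A B []).
  { split; [constructor|split; [constructor|exact I]]. }
  set (v := exist _ [] Vnil : X G A B).
  assert (stab : forall g, act g v = v -> A g).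
  { intros g E. destruct (pev G A B (h g) v) as [a [Ha Ea]].
    fold (act g v) in Ea. rewrite E in Ea. simpl in Ea. rewrite Hpi, mulg1 in Ea.
    symmetry in Ea. apply inv_uniq in Ea. subst a. apply (Ainv_iff G A HA). auto. }
  assert (rot : forall p, P p -> forall x, dX G A B x (act p x) = dX G A B v x + dX G A B v x).
  { intros p Hp x. assert (Ap : A p) by (apply HP; auto).
    unfold act. rewrite HhA by auto. rewrite (phiF_A G A B HA HB p Ap).
    destruct x as [l Vl]. unfold dX. simpl. apply (rot_push G A B HA HB P HP HPC); auto. }
  assert (Pmul : forall x y, P x -> P y -> P (gmul x y)) by apply HP.
  assert (Pnorm : forall x a, P x -> A a -> P (gconj x a)) by apply HP.
  pose proof (tree_main G A P Pmul Pnorm (X G A B) act act_mul act_one (dX G A B)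
    (fun x y => dist_sym G _ _) (fun x => dist_refl G _)
    (fun x y H => sig_eqX G A B x y (dist_zero G _ _ H))
    (fun x y z => dist_tri G _ _ _) (fun x y z w => dist_four G _ _ _ _)
    (fun g x y => piso G A B (h g) x y) v stab rot
    (map (fun i => (f i, d i)) (seq 0 n))) as T.
  assert (Good G P (map (fun i => (f i, d i)) (seq 0 n))) as HGood.
  { unfold Good. apply Forall_forall. intros z Hz. apply in_map_iff in Hz.
    destruct Hz as [i [E Hi]]. subst z. simpl. apply in_seq in Hi. apply Hd. lia. }
  specialize (T HGood).
  rewrite prod_iprod in T.
  assert (Hfix : act (iprod n (fun i => gconj (d i) (f i))) v = v).
  { unfold act. rewrite HhA by auto. rewrite (phiF_A G A B HA HB _ Hx). apply sig_eqX. reflexivity. }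
  specialize (T Hfix).
  assert (Hin : In (f 0, d 0) (map (fun i => (f i, d i)) (seq 0 n))).
  { apply in_map_iff. exists 0. split; auto. apply in_seq. lia. }
  pose proof (Lam_pos_in G (X G A B) act (dX G A B) v _ _ Hin) as Hle.
  rewrite T in Hle.
  assert (E0 : dX G A B v (act (ginv (f 0)) v) = 0) by (unfold lam, uu in Hle; simpl in Hle; lia).
  apply dist_zero in E0. apply sig_eqX in E0.
  apply (Hf 0); [lia|]. apply (Ainv_iff G A HA). apply stab. symmetry. exact E0.
Qed.
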